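(* For the two-pathogen model described in the context with positive parameters: (1) If $s=0$, $\mathcal{R}_{0,A}>1$ and $\mathcal{R}_{0,B}<1$, the disease-$B$-free equilibrium $(S_A,I_A,\widetilde I_A,S_B,I_B,\widetilde I_B)=(1-\bar I_A-\tfrac{\tau_R}{\tau_I}\bar I_A,\bar I_A,\bar I_A,1,0,0)$ is locally asymptotically stable; symmetrically, if $s=0$, $\mathcal{R}_{0,B}>1$ and $\mathcal{R}_{0,A}<1$, the disease-$A$-free equilibrium $(1,0,0,1-\bar I_B-\tfrac{\tau_R}{\tau_I}\bar I_B,\bar I_B,\bar I_B)$ is locally asymptotically stable. (2) If $s=1$, $\mathcal{R}_{0,A}>1$ and $\mathcal{R}_{0,B}<e^{k\bar I_A}$, the disease-$B$-free equilibrium is locally asymptotically stable, and in this case $\mathcal{R}_{0,A}>\mathcal{R}_{0,B}$; symmetrically, if $s=1$, $\mathcal{R}_{0,B}>1$ and $\mathcal{R}_{0,A}<e^{k\bar I_B}$, the disease-$A$-free equilibrium is locally asymptotically stable and $\mathcal{R}_{0,B}>\mathcal{R}_{0,A}$. (3) If $s\in(0,1)$, $\mathcal{R}_{0,A}>1$ and $\mathcal{R}_{0,B}<\dfrac{e^{k\bar I_A}}{e^{k\bar I_A}-s(e^{k\bar I_A}-1)}$, the disease-$B$-free equilibrium is locally asymptotically stable, and $\mathcal{R}_{0,A}>\mathcal{R}_{0,B}$; symmetrically, if $s\in(0,1)$, $\mathcal{R}_{0,B}>1$ and $\mathcal{R}_{0,A}<\dfrac{e^{k\bar I_B}}{e^{k\bar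 I_B}-s(e^{k\bar I_B}-1)}$, the disease-$A$-free equilibrium is locally asymptotically stable and $\mathcal{R}_{0,B}>\mathcal{R}_{0,A}$.
   Context: Model: for $i\in\{A,B\}$ with $j$ denoting the other disease, state variables $S_i,I_i,R_i,\widetilde I_i$ satisfy $\dot S_i=-\beta_i S_iI_i+R_i/\tau_R$, $\dot I_i=\beta_iS_iI_i-I_i/\tau_I$, $\dot R_i=I_i/\tau_I-R_i/\tau_R$, $\dot{\widetilde I}_i=(I_i-\widetilde I_i)/\tau_P$, with $S_i+I_i+R_i=1$, where $\beta_i=\beta_{0,i}\,e^{-k\widetilde I_i}\bigl(1-s(1-e^{-k\widetilde I_j})\bigr)$. All parameters $\beta_{0,A},\beta_{0,B},\tau_I,\tau_R,\tau_P,k$ are positive and $s\in[0,1]$ is the spillover constant. $\mathcal{R}_{0,i}=\beta_{0,i}\tau_I$. When $\mathcal{R}_{0,i}>1$, $\bar I_i$ denotes the unique positive solution of $e^{kI}=\beta_{0,i}\tau_I-\beta_{0,i}(\tau_I+\tau_R)I$. The reduced system is obtained by substituting $R_i=1-S_i-I_i$ and keeping only the equations for $S_i,I_i,\widetilde I_i$; equilibria are written in the order $(S_A,I_A,\widetilde I_A,S_B,I_B,\widetilde I_B)$. Locally asymptotically stable means all eigenvalues of the Jacobian of the reduced system at the equilibrium have negative real part. *)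

(* Defs.v *)
From HB Require Import structures.
From mathcomp Require Import all_boot all_order all_algebra.
From mathcomp Require Import all_classical all_reals all_analysis.
From mathcomp Require Import complex.
Set Implicit Arguments. Unset Strict Implicit. Unset Printing Implicit Defensive.
Import Order.TTheory GRing.Theory Num.Theory.
Import numFieldNormedType.Exports.
Local Open Scope ring_scope.

Section TwoPathogen.
Variable R : realType.

(* coordinate n of a state vector x = (S_A, I_A, Itilde_A, S_B, I_B, Itilde_B) *)
Definition coord (x : 'rV[R]_6) (n : nat) : R := x ord0 (inord n).

Definition beta_eff (b0 k s Iti Itj : R) : R :=
  b0 * expR (- (k * Iti)) * (1 - s * (1 - expR (- (k * Itj)))).

(* right-hand sides of the reduced system for disease i (R_i = 1 - S_i - I_i) *)
Definition rhsS (b0 k s tI tR tP Si Ii Iti Itj : R) : R :=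
  - (beta_eff b0 k s Iti Itj * Si * Ii) + (1 - Si - Ii) / tR.
Definition rhsI (b0 k s tI tR tP Si Ii Iti Itj : R) : R :=
  beta_eff b0 k s Iti Itj * Si * Ii - Ii / tI.
Definition rhsIt (tP Ii Iti : R) : R := (Ii - Iti) / tP.

Definition reduced_field (b0A b0B tI tR tP k s : R) (x : 'rV[R]_6) : 'rV[R]_6 :=
  let SA := coord x 0 in let IA := coord x 1 in let ItA := coord x 2 in
  let SB := coord x 3 in let IB := coord x 4 in let ItB := coord x 5 in
  \row_(i < 6)
    nth 0 [:: rhsS b0A k s tI tR tP SA IA ItA ItB;
              rhsI b0A k s tI tR tP SA IA ItA ItB;
              rhsIt tP IA ItA;
              rhsS b0B k s tI tR tP SB IB ItB ItA;
              rhsI b0B k s tI tR tP SB IB ItB ItA;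
              rhsIt tP IB ItB] i.

Definition state6 (a0 a1 a2 a3 a4 a5 : R) : 'rV[R]_6 :=
  \row_(i < 6) nth 0 [:: a0; a1; a2; a3; a4; a5] i.

Definition eigenvalueC n (M : 'M[R]_n) (z : R[i]) : Prop :=
  root (char_poly (map_mx (fun r : R => (r%:C)%C) M)) z.

Definition LAS (b0A b0B tI tR tP k s : R) (e : 'rV[R]_6) : Prop :=
  forall z : R[i],
    eigenvalueC (jacobian (reduced_field b0A b0B tI tR tP k s) e) z ->
    complex.Re z < 0.

Definition Ibar_spec (b0 tI tR k I : R) : Prop :=
  0 < I /\ expR (k * I) = b0 * tI - b0 * (tI + tR) * I.

Definition B_free_eq (tI tR IA : R) : 'rV[R]_6 :=
  state6 (1 - IA - tR / tI * IA) IA IA 1 0 0.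
Definition A_free_eq (tI tR IB : R) : 'rV[R]_6 :=
  state6 1 0 0 (1 - IB - tR / tI * IB) IB IB.

End TwoPathogen.

(* Main.v *)
Require Import Defs.
From HB Require Import structures.
From mathcomp Require Import all_boot all_order all_algebra.
From mathcomp Require Import all_classical all_reals all_analysis.
From mathcomp Require Import complex.
From mathcomp Require Import ring lra zify.
Set Implicit Arguments. Unset Strict Implicit. Unset Printing Implicit Defensive.
Import Order.TTheory GRing.Theory Num.Theory.
Import numFieldNormedType.Exports.
Local Open Scope ring_scope.
Import Defs.

Section D.
Variable R : realType.
Variable V : normedModType R.
Implicit Types (f g h : V -> R) (p v : V).

Lemma derive_line f p v : 'D_v f p = 'D_1 (fun t : R => f (t *: v + p)) 0.
Proof.
rewrite /derive.
have -> : (fun h : R => h^-1 *: ((f \o shift p) (h *: v) - f p)) =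
  (fun h : R => h^-1 *: (((fun t : R => f (t *: v + p)) \o shift 0) h%:A - f (0 *: v + p))).
  by apply: funext => u /=; rewrite addr0 scale0r add0r [_%:A]mulr1.
by [].
Qed.

Lemma isd_cst (a : R) p v : is_derive p v (fun _ => a) 0.
Proof. exact: is_derive_cst. Qed.

Lemma isd_add f g p v df dg : is_derive p v f df -> is_derive p v g dg ->
  is_derive p v (fun x => f x + g x) (df + dg).
Proof. move=> H1 H2; exact: is_deriveD. Qed.

Lemma isd_opp f p v df : is_derive p v f df ->
  is_derive p v (fun x => - f x) (- df).
Proof. move=> H1; exact: is_deriveN. Qed.

Lemma isd_sub f g p v df dg : is_derive p v f df -> is_derive p v g dg ->
  is_derive p v (fun x => f x - g x) (df - dg).
Proof. move=> H1 H2; exact: is_deriveB. Qed.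

Lemma isd_mul f g p v df dg : is_derive p v f df -> is_derive p v g dg ->
  is_derive p v (fun x => f x * g x) (f p * dg + g p * df).
Proof. move=> H1 H2; exact: is_deriveM. Qed.

Lemma isd_exp h p v dh : is_derive p v h dh ->
  is_derive p v (fun x => expR (h x)) (expR (h p) * dh).
Proof.
move=> [H1 H2].
have L1 := (derivable1P h p v).1 H1.
have E0 : h (0 *: v + p) = h p by rewrite scale0r add0r.
have G : is_derive (0:R) 1 (fun t : R => h (t *: v + p)) dh.
  by apply: DeriveDef => //; rewrite -derive_line.
have F : is_derive ((fun t : R => h (t *: v + p)) 0) 1 expR (expR (h p)).
  rewrite E0; exact: is_derive_expR.
have C := is_derive1_comp F G.
apply: DeriveDef.
  apply: (derivable1P (fun x => expR (h x)) p v).2; case: C => C1 _; exact: C1.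
rewrite derive_line; case: C => _ C2; exact: C2.
Qed.

Lemma dif_cst (a : R) p : differentiable (fun _ : V => a) p.
Proof. exact: differentiable_cst. Qed.
Lemma dif_add f g p : differentiable f p -> differentiable g p ->
  differentiable (fun x => f x + g x) p.
Proof. move=> H1 H2; exact: differentiableD. Qed.
Lemma dif_opp f p : differentiable f p -> differentiable (fun x => - f x) p.
Proof. move=> H1; exact: differentiableN. Qed.
Lemma dif_sub f g p : differentiable f p -> differentiable g p ->
  differentiable (fun x => f x - g x) p.
Proof. move=> H1 H2; apply: dif_add => //; exact: dif_opp. Qed.
Lemma dif_mul f g p : differentiable f p -> differentiable g p ->
  differentiable (fun x => f x * g x) p.
Proof. move=> H1 H2; exact: differentiableM. Qed.
Lemma dif_exp h p : differentiable h p -> differentiable (fun x => expR (h x)) p.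
Proof.
move=> H; apply: (differentiable_comp (g := expR)) => //.
exact/derivable1_diffP/derivable_expR.
Qed.

End D.


Section M.
Variable R : realType.
Variables (b0A b0B tI tR tP k s : R).

Definition dbeta (b0 c d dc dd : R) : R :=
  - k * dc * beta_eff b0 k s c d - b0 * expR (- (k * c)) * s * k * dd * expR (- (k * d)).
Definition dS (b0 Si Ii Iti Itj dSi dIi dIti dItj : R) : R :=
  - (dbeta b0 Iti Itj dIti dItj * Si * Ii + beta_eff b0 k s Iti Itj * dSi * Ii
     + beta_eff b0 k s Iti Itj * Si * dIi) - (dSi + dIi) / tR.
Definition dI (b0 Si Ii Iti Itj dSi dIi dIti dItj : R) : R :=
  dbeta b0 Iti Itj dIti dItj * Si * Ii + beta_eff b0 k s Iti Itj * dSi * Ii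
     + beta_eff b0 k s Iti Itj * Si * dIi - dIi / tI.
Definition dIt (dIi dIti : R) : R := (dIi - dIti) / tP.

Definition d_list (cp cv : nat -> R) : seq R :=
  [:: dS b0A (cp 0) (cp 1) (cp 2) (cp 5) (cv 0) (cv 1) (cv 2) (cv 5);
      dI b0A (cp 0) (cp 1) (cp 2) (cp 5) (cv 0) (cv 1) (cv 2) (cv 5);
      dIt (cv 1) (cv 2);
      dS b0B (cp 3) (cp 4) (cp 5) (cp 2) (cv 3) (cv 4) (cv 5) (cv 2);
      dI b0B (cp 3) (cp 4) (cp 5) (cp 2) (cv 3) (cv 4) (cv 5) (cv 2);
      dIt (cv 4) (cv 5)].

Definition rf_list (x : 'rV[R]_6) : seq R :=
  let SA := coord x 0 in let IA := coord x 1 in let ItA := coord x 2 in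
  let SB := coord x 3 in let IB := coord x 4 in let ItB := coord x 5 in
  [:: rhsS b0A k s tI tR tP SA IA ItA ItB;
      rhsI b0A k s tI tR tP SA IA ItA ItB;
      rhsIt tP IA ItA;
      rhsS b0B k s tI tR tP SB IB ItB ItA;
      rhsI b0B k s tI tR tP SB IB ItB ItA;
      rhsIt tP IB ItB].

Lemma isd_coord (p v : 'rV[R]_6) n :
  is_derive p v (fun x : 'rV[R]_6 => coord x n) (coord v n).
Proof.
have dc := differentiable_coord p ord0 (inord n).
apply: DeriveDef; first exact: diff_derivable.
have did : derivable (@id 'rV[R]_6) p v by exact: derivable_id.
transitivity (('D_v (@id 'rV[R]_6) p) ord0 (inord n)); last first.
  by rewrite derive_id.
by rewrite (derive_mx did) mxE.
Qed.

Ltac dchain := repeat first [ eapply isd_coord | eapply isd_exp | eapply isd_add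
  | eapply isd_opp | eapply isd_mul | eapply isd_cst ].

Lemma isd_rf (p v : 'rV[R]_6) (j : nat) : (j < 6)%N ->
  is_derive p v (fun x => nth 0 (rf_list x) j) (nth 0 (d_list (coord p) (coord v)) j).
Proof.
case: j => [|[|[|[|[|[|j]]]]]] // _;
  rewrite /rf_list /d_list /rhsS /rhsI /rhsIt /dS /dI /dIt /dbeta /beta_eff /=;
  (eapply is_derive_eq; [ dchain | ]); cbv beta; ring.
Qed.


Definition ev (n : nat) : 'rV[R]_6 := \row_(i < 6) ((i : nat) == n)%:R.

Lemma difW_add (f g : 'rV[R]_6 -> 'rV[R]_6) p : differentiable f p -> differentiable g p ->
  differentiable (fun x => f x + g x) p.
Proof. move=> H1 H2; exact: differentiableD. Qed.

Ltac difchain := repeat first [ eapply dif_exp | eapply dif_add | eapply dif_opp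
  | eapply dif_mul | eapply differentiable_coord | eapply dif_cst ].

Lemma dif_rf (p : 'rV[R]_6) (j : nat) : (j < 6)%N ->
  differentiable (fun x => nth 0 (rf_list x) j) p.
Proof.
case: j => [|[|[|[|[|[|j]]]]]] // _;
  rewrite /rf_list /rhsS /rhsI /rhsIt /beta_eff /coord /=; difchain.
Qed.

Lemma rf_decomp : reduced_field b0A b0B tI tR tP k s = fun x =>
  nth 0 (rf_list x) 0 *: ev 0 + nth 0 (rf_list x) 1 *: ev 1 +
  nth 0 (rf_list x) 2 *: ev 2 + nth 0 (rf_list x) 3 *: ev 3 +
  nth 0 (rf_list x) 4 *: ev 4 + nth 0 (rf_list x) 5 *: ev 5.
Proof.
apply: funext => x; apply/rowP => j; rewrite !mxE.
case: j => [[|[|[|[|[|[|j]]]]]] Hj] //=; rewrite ?mulr1n ?mulr0n ?mulr0 ?mulr1 ?addr0 ?add0r //.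
Qed.

Lemma dif_F p : differentiable (reduced_field b0A b0B tI tR tP k s) p.
Proof.
rewrite rf_decomp.
repeat apply: difW_add; apply: differentiableZl; exact: dif_rf.
Qed.

Lemma jac_entry p (i j : 'I_6) :
  jacobian (reduced_field b0A b0B tI tR tP k s) p i j =
  nth 0 (d_list (coord p) (coord (delta_mx 0 i))) j.
Proof.
have dF := dif_F p.
have -> : jacobian (reduced_field b0A b0B tI tR tP k s) p i j =
  ((delta_mx ord0 i : 'rV[R]_6) *m jacobian (reduced_field b0A b0B tI tR tP k s) p) ord0 j.
  by rewrite -(rowE i) [X in _ = X]mxE.
have E := @deriveEjacobian _ _ _ _ p (delta_mx ord0 i : 'rV[R]_6) dF.
rewrite -E derive_mx; last exact: diff_derivable.
rewrite mxE.
have -> : (fun t => reduced_field b0A b0B tI tR tP k s t ord0 j) =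
          (fun x => nth 0 (rf_list x) j) by apply: funext => x; rewrite mxE.
by case: (isd_rf p (delta_mx ord0 i) (ltn_ord j)) => _ ->.
Qed.

End M.

Lemma det3 (F : comNzRingType) (g : nat -> nat -> F) :
  \det (\matrix_(i < 3, j < 3) g i j) =
  g 0 0 * (g 1 1 * g 2 2 - g 1 2 * g 2 1)
  - g 0 1 * (g 1 0 * g 2 2 - g 1 2 * g 2 0)
  + g 0 2 * (g 1 0 * g 2 1 - g 1 1 * g 2 0).
Proof.
rewrite (expand_det_row _ ord0) !big_ord_recl big_ord0 /cofactor.
rewrite !(expand_det_row _ ord0) !big_ord_recl !big_ord0 /cofactor !det_mx11.
rewrite !mxE /bump /=. ring.
Qed.

Lemma blk (F : nzRingType) (g : nat -> nat -> F) :
  (\matrix_(i < 3 + 3, j < 3 + 3) g i j) =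
  block_mx (\matrix_(i < 3, j < 3) g i j) (\matrix_(i < 3, j < 3) g i (3 + j)%N)
           (\matrix_(i < 3, j < 3) g (3 + i)%N j) (\matrix_(i < 3, j < 3) g (3 + i)%N (3 + j)%N).
Proof.
rewrite -[LHS]submxK; congr block_mx; apply/matrixP => i j; rewrite !mxE /=.
all: done.
Qed.

Lemma cp_horner (F : fieldType) n (A : 'M[F]_n) z :
  (char_poly A).[z] = \det (z%:M - A).
Proof.
rewrite /char_poly -[_.[z]]/(horner_eval z _) -det_map_mx; congr (\det _).
apply/matrixP => i j; by rewrite !mxE rmorphB rmorphMn /= !horner_evalE hornerX hornerC.
Qed.

Section Cubic.
Local Open Scope complex_scope.
Lemma cubic_Re (R : realType) (c2 c1 c0 : R) (z : R[i]) :
  0 < c2 -> 0 < c0 -> c0 < c2 * c1 ->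
  z ^+ 3 + c2%:C * z ^+ 2 + c1%:C * z + c0%:C = 0 -> complex.Re z < 0.
Proof.
move=> h2 h0 h21; case: z => x y; rewrite !exprS !expr0 /= => H.
injection H => H1 H2 {H}.
have c1p : 0 < c1 by nra.
rewrite ltNge; apply/negP => hx.
have Q : y * (3 * x ^+ 2 - y ^+ 2 + 2 * c2 * x + c1) = 0.
  by rewrite -H1; ring.
have RR : x ^+ 3 - 3 * x * y ^+ 2 + c2 * (x ^+ 2 - y ^+ 2) + c1 * x + c0 = 0.
  by rewrite -H2; ring.
have x3 : 0 <= x ^+ 3 by rewrite exprn_ge0.
have x2 : 0 <= x ^+ 2 by rewrite exprn_ge0.
have cx2 : 0 <= c2 * x ^+ 2 by rewrite mulr_ge0 // ltW.
have c1x : 0 <= c1 * x by rewrite mulr_ge0 // ltW.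
have c22x : 0 <= c2 ^+ 2 * x by rewrite mulr_ge0 // exprn_ge0 // ltW.
move/eqP: Q; rewrite mulf_eq0 => /orP [/eqP y0 | /eqP Q].
  have RR' : x ^+ 3 + c2 * x ^+ 2 + c1 * x + c0 = 0 by rewrite -RR y0; ring.
  have : 0 < x ^+ 3 + c2 * x ^+ 2 + c1 * x + c0 by lra.
  by rewrite RR' ltxx.
have E : x ^+ 3 - 3 * x * y ^+ 2 + c2 * (x ^+ 2 - y ^+ 2) + c1 * x + c0
   - (3 * x + c2) * (3 * x ^+ 2 - y ^+ 2 + 2 * c2 * x + c1) =
   - 8 * x ^+ 3 - 8 * (c2 * x ^+ 2) - 2 * (c1 * x) - 2 * (c2 ^+ 2 * x) - (c2 * c1 - c0).
  by ring.
rewrite RR Q mulr0 subr0 in E.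
lra.
Qed.
End Cubic.

Section Gen.
Local Open Scope complex_scope.
Variable R : realType.
Definition c2 (e : nat -> nat -> R) := - (e 0 0 + e 1 1 + e 2 2).
Definition c1 (e : nat -> nat -> R) :=
  e 0 0 * e 1 1 - e 0 1 * e 1 0 + e 0 0 * e 2 2 - e 0 2 * e 2 0
  + e 1 1 * e 2 2 - e 1 2 * e 2 1.
Definition c0 (e : nat -> nat -> R) := - (
  e 0 0 * (e 1 1 * e 2 2 - e 1 2 * e 2 1)
  - e 0 1 * (e 1 0 * e 2 2 - e 1 2 * e 2 0)
  + e 0 2 * (e 1 0 * e 2 1 - e 1 1 * e 2 0)).
Definition Hurwitz (e : nat -> nat -> R) :=
  0 < c2 e /\ 0 < c0 e /\ c0 e < c2 e * c1 e.

Lemma char3 (z : R[i]) (e : nat -> nat -> R) :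
  \det (\matrix_(i < 3, j < 3) (z *+ (i == j)%N - (e i j)%:C)) =
  z ^+ 3 + (c2 e)%:C * z ^+ 2 + (c1 e)%:C * z + (c0 e)%:C.
Proof.
rewrite (det3 (fun i j => z *+ (i == j)%N - (e i j)%:C)) /= /c2 /c1 /c0.
rewrite ?mulr1n ?mulr0n.
rewrite !(rmorphD, rmorphN, rmorphM, rmorphB) /=.
ring.
Qed.

Lemma hurwitz_Re e (z : R[i]) : Hurwitz e ->
  \det (\matrix_(i < 3, j < 3) (z *+ (i == j)%N - (e i j)%:C)) = 0 ->
  complex.Re z < 0.
Proof.
move=> [h2 [h0 h21]]; rewrite char3; exact: cubic_Re.
Qed.

Lemma stab_gen (J : 'M[R]_6) (e : nat -> nat -> R) (z : R[i]) :
  J = \matrix_(i < 6, j < 6) e i j ->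
  ((forall i j, (i < 3)%N -> (j < 3)%N -> e i (3 + j)%N = 0) \/
   (forall i j, (i < 3)%N -> (j < 3)%N -> e (3 + i)%N j = 0)) ->
  Hurwitz e -> Hurwitz (fun i j => e (3 + i)%N (3 + j)%N) ->
  root (char_poly (map_mx (fun r : R => (r%:C)%C) J)) z -> complex.Re z < 0.
Proof.
move=> -> Hz HA HB; rewrite /root cp_horner.
pose g := fun i j : nat => z *+ (i == j)%N - (e i j)%:C.
have -> : z%:M - map_mx (fun r : R => (r%:C)%C) (\matrix_(i < 6, j < 6) e i j)
   = \matrix_(i < 3 + 3, j < 3 + 3) g i j.
  by apply/matrixP => i j; rewrite !mxE.
rewrite blk.
have gA : \matrix_(i < 3, j < 3) g i j = \matrix_(i < 3, j < 3) (z *+ (i == j)%N - (e i j)%:C) by [].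
have gB : \matrix_(i < 3, j < 3) g (3 + i)%N (3 + j)%N =
    \matrix_(i < 3, j < 3) (z *+ (i == j)%N - ((fun i j => e (3 + i)%N (3 + j)%N) i j)%:C).
  by apply/matrixP => i j; rewrite !mxE /g eqn_add2l.
case: Hz => Hz.
- have -> : \matrix_(i < 3, j < 3) g i (3 + j)%N = 0.
    apply/matrixP => i j; rewrite !mxE /g Hz //.
    rewrite [X in z *+ (nat_of_bool X)](_ : _ = false); last first.
      have hi := ltn_ord i; apply/negbTE/eqP; lia.
    by rewrite /= mulr0n rmorph0 subr0.
  rewrite (@det_lblock _ 3 3) gA gB mulf_eq0 => /orP [] /eqP H.
    exact: hurwitz_Re HA H.
  exact: hurwitz_Re HB H.
- have -> : \matrix_(i < 3, j < 3) g (3 + i)%N j = 0.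
    apply/matrixP => i j; rewrite !mxE /g Hz //.
    rewrite [X in z *+ (nat_of_bool X)](_ : _ = false); last first.
      have hj := ltn_ord j; apply/negbTE/eqP; lia.
    by rewrite /= mulr0n rmorph0 subr0.
  rewrite (@det_ublock _ 3 3) gA gB mulf_eq0 => /orP [] /eqP H.
    exact: hurwitz_Re HA H.
  exact: hurwitz_Re HB H.
Qed.
End Gen.

Section Spec.
Variable R : realType.
Variables (b0A b0B tI tR tP k s : R).

Lemma coord_state (a0 a1 a2 a3 a4 a5 : R) n : (n < 6)%N ->
  coord (state6 a0 a1 a2 a3 a4 a5) n = nth 0 [:: a0; a1; a2; a3; a4; a5] n.
Proof. by move=> hn; rewrite /coord /state6 mxE inordK. Qed.

Lemma coord_delta (i : 'I_6) n : (n < 6)%N ->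
  coord (delta_mx 0 i : 'rV[R]_6) n = ((i : nat) == n)%:R.
Proof.
move=> hn; rewrite /coord mxE /=.
by rewrite -val_eqE /= inordK // eq_sym.
Qed.

Definition ej (a : seq R) (i j : nat) : R :=
  nth 0 (d_list b0A b0B tI tR tP k s (fun q => nth 0 a q) (fun q => (i == q)%:R)) j.

Lemma J_state (a0 a1 a2 a3 a4 a5 : R) :
  jacobian (reduced_field b0A b0B tI tR tP k s) (state6 a0 a1 a2 a3 a4 a5) =
  \matrix_(i < 6, j < 6) ej [:: a0; a1; a2; a3; a4; a5] i j.
Proof.
apply/matrixP => i j; rewrite jac_entry mxE /ej /d_list.
by rewrite !coord_state // !coord_delta.
Qed.

Definition tbl (m : seq (seq R)) (i j : nat) : R := nth 0 (nth [::] m i) j.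

Ltac ent hyp := rewrite /tbl /ej /d_list /dS /dI /dIt /dbeta /beta_eff /=;
  rewrite ?mulr1n ?mulr0n ?mulr0 ?oppr0 ?expR0; (try rewrite -hyp); ring.


Lemma Hurwitz_ext (e e' : nat -> nat -> R) :
  (forall i j, (i < 3)%N -> (j < 3)%N -> e' i j = e i j) -> Hurwitz e -> Hurwitz e'.
Proof.
move=> H; rewrite /Hurwitz /c2 /c1 /c0 !H //.
Qed.

Ltac pos := first [ assumption | apply: addr_gt0; pos | apply: mulr_gt0; pos ].

Lemma hurA (a p q r K : R) : 0 < a -> 0 < p -> 0 < q -> 0 < r -> 0 < K ->
  Hurwitz (tbl [:: [:: -a - p; a; 0]; [:: -q - p; 0; r]; [:: K; -K; -r]]).
Proof.
move=> ha hp hq hr hK.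
have C2 : c2 (tbl [:: [:: -a - p; a; 0]; [:: -q - p; 0; r]; [:: K; -K; -r]]) = a + p + r.
  by rewrite /c2 /tbl /=; ring.
have C1 : c1 (tbl [:: [:: -a - p; a; 0]; [:: -q - p; 0; r]; [:: K; -K; -r]]) =
   a * q + a * p + a * r + p * r + r * K.
  by rewrite /c1 /tbl /=; ring.
have C0 : c0 (tbl [:: [:: -a - p; a; 0]; [:: -q - p; 0; r]; [:: K; -K; -r]]) =
   p * r * K + a * q * r + a * p * r.
  by rewrite /c0 /tbl /=; ring.
rewrite /Hurwitz C2 C1 C0; split; first by pos.
split; first by pos.
rewrite -subr_gt0.
have -> : (a + p + r) * (a * q + a * p + a * r + p * r + r * K) -
  (p * r * K + a * q * r + a * p * r) =
  a * (a * q + a * p + a * r + p * r + r * K) + p * (a * q + a * p + a * r + p * r)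
  + r * (a * r + p * r + r * K) by ring.
pos.
Qed.

Lemma hurB (g p q r : R) : 0 < p -> g < q -> 0 < r ->
  Hurwitz (tbl [:: [:: -p; 0; 0]; [:: -g - p; g - q; r]; [:: 0; 0; -r]]).
Proof.
move=> hp; rewrite -subr_gt0 => hg hr.
have C2 : c2 (tbl [:: [:: -p; 0; 0]; [:: -g - p; g - q; r]; [:: 0; 0; -r]]) = p + (q - g) + r.
  by rewrite /c2 /tbl /=; ring.
have C1 : c1 (tbl [:: [:: -p; 0; 0]; [:: -g - p; g - q; r]; [:: 0; 0; -r]]) =
   p * (q - g) + p * r + (q - g) * r.
  by rewrite /c1 /tbl /=; ring.
have C0 : c0 (tbl [:: [:: -p; 0; 0]; [:: -g - p; g - q; r]; [:: 0; 0; -r]]) =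
   p * r * (q - g).
  by rewrite /c0 /tbl /=; ring.
rewrite /Hurwitz C2 C1 C0; split; first by pos.
split; first by pos.
rewrite -subr_gt0.
have -> : (p + (q - g) + r) * (p * (q - g) + p * r + (q - g) * r) - p * r * (q - g) =
  p * (p * (q - g) + p * r + (q - g) * r) + (q - g) * (p * (q - g) + p * r + (q - g) * r)
  + r * (p * r + (q - g) * r) by ring.
pos.
Qed.

Lemma LAS_Bgen (IA SA : R) : 0 < tI -> 0 < tR -> 0 < tP -> 0 < k -> 0 < IA ->
  0 < b0A ->
  b0A * expR (- (k * IA)) * SA = tI^-1 ->
  b0B * (1 - s * (1 - expR (- (k * IA)))) < tI^-1 ->
  LAS b0A b0B tI tR tP k s (state6 SA IA IA 1 0 0).
Proof.
move=> htI htR htP hk hIA hb hyp hg z; rewrite /eigenvalueC J_state => Hz.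
apply: (stab_gen (e := ej [:: SA; IA; IA; 1; 0; 0]) _ _ _ _ Hz) => //.
- left => i j; case: i => [|[|[|i]]] //; case: j => [|[|[|j]]] // _ _; ent hyp.
- have ha : 0 < b0A * expR (- (k * IA)) * IA by rewrite !mulr_gt0 // expR_gt0.
  have hp : 0 < tR^-1 by rewrite invr_gt0.
  have hq : 0 < tI^-1 by rewrite invr_gt0.
  have hr : 0 < tP^-1 by rewrite invr_gt0.
  have hK : 0 < k * tI^-1 * IA by rewrite !mulr_gt0.
  apply: (Hurwitz_ext _ (hurA ha hp hq hr hK)) => i j.
  case: i => [|[|[|i]]] //; case: j => [|[|[|j]]] // _ _; ent hyp.
- have hp : 0 < tR^-1 by rewrite invr_gt0.
  have hr : 0 < tP^-1 by rewrite invr_gt0.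
  apply: (Hurwitz_ext _ (hurB hp hg hr)) => i j.
  case: i => [|[|[|i]]] //; case: j => [|[|[|j]]] // _ _; ent hyp.
Qed.

Lemma LAS_Agen (IB SB : R) : 0 < tI -> 0 < tR -> 0 < tP -> 0 < k -> 0 < IB ->
  0 < b0B ->
  b0B * expR (- (k * IB)) * SB = tI^-1 ->
  b0A * (1 - s * (1 - expR (- (k * IB)))) < tI^-1 ->
  LAS b0A b0B tI tR tP k s (state6 1 0 0 SB IB IB).
Proof.
move=> htI htR htP hk hIB hb hyp hg z; rewrite /eigenvalueC J_state => Hz.
apply: (stab_gen (e := ej [:: 1; 0; 0; SB; IB; IB]) _ _ _ _ Hz) => //.
- right => i j; case: i => [|[|[|i]]] //; case: j => [|[|[|j]]] // _ _; ent hyp.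
- have hp : 0 < tR^-1 by rewrite invr_gt0.
  have hr : 0 < tP^-1 by rewrite invr_gt0.
  apply: (Hurwitz_ext _ (hurB hp hg hr)) => i j.
  case: i => [|[|[|i]]] //; case: j => [|[|[|j]]] // _ _; ent hyp.
- have ha : 0 < b0B * expR (- (k * IB)) * IB by rewrite !mulr_gt0 // expR_gt0.
  have hp : 0 < tR^-1 by rewrite invr_gt0.
  have hq : 0 < tI^-1 by rewrite invr_gt0.
  have hr : 0 < tP^-1 by rewrite invr_gt0.
  have hK : 0 < k * tI^-1 * IB by rewrite !mulr_gt0.
  apply: (Hurwitz_ext _ (hurA ha hp hq hr hK)) => i j.
  case: i => [|[|[|i]]] //; case: j => [|[|[|j]]] // _ _; ent hyp.
Qed.

End Spec.

Section Final.
Variable R : realType.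

Lemma hg_of (X b s tI : R) : 0 < X -> 0 < tI -> b * tI * (X - s * (X - 1)) < X ->
  b * (1 - s * (1 - X^-1)) < tI^-1.
Proof.
move=> hX htI hN.
have -> : b * (1 - s * (1 - X^-1)) = (b * tI * (X - s * (X - 1))) / X * tI^-1.
  by field; apply/andP; split; rewrite gt_eqF.
have h1 : b * tI * (X - s * (X - 1)) / X < 1 by rewrite ltr_pdivrMr // mul1r.
by rewrite -[X in _ < X]mul1r ltr_pM2r // invr_gt0.
Qed.

Lemma hyp_of (b0 tI tR k IA : R) : 0 < tI -> Ibar_spec b0 tI tR k IA ->
  b0 * expR (- (k * IA)) * (1 - IA - tR / tI * IA) = tI^-1.
Proof.
move=> htI [hIA hX]; rewrite expRN hX.
have hD : b0 * tI - b0 * (tI + tR) * IA != 0 by rewrite -hX gt_eqF // expR_gt0.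
by field; apply/andP; split => //; rewrite gt_eqF.
Qed.

Lemma X_lt (b0 tI tR k IA : R) : 0 < b0 -> 0 < tI -> 0 < tR ->
  Ibar_spec b0 tI tR k IA -> expR (k * IA) < b0 * tI.
Proof.
move=> hb htI htR [hIA ->].
have : 0 < b0 * (tI + tR) * IA by rewrite !mulr_gt0 // addr_gt0.
lra.
Qed.

End Final.

Unset Implicit Arguments.

Theorem theorem4 (R : realType) (b0A b0B tI tR tP k s : R)
  (hb0A : 0 < b0A) (hb0B : 0 < b0B) (htI : 0 < tI) (htR : 0 < tR)
  (htP : 0 < tP) (hk : 0 < k) (hs : 0 <= s <= 1) :
  (* (1) s = 0 *)
  (s = 0 ->
    (forall IA : R, 1 < b0A * tI -> b0B * tI < 1 -> Ibar_spec b0A tI tR k IA ->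
       LAS b0A b0B tI tR tP k s (B_free_eq tI tR IA)) /\
    (forall IB : R, 1 < b0B * tI -> b0A * tI < 1 -> Ibar_spec b0B tI tR k IB ->
       LAS b0A b0B tI tR tP k s (A_free_eq tI tR IB))) /\
  (* (2) s = 1 *)
  (s = 1 ->
    (forall IA : R, 1 < b0A * tI -> Ibar_spec b0A tI tR k IA ->
       b0B * tI < expR (k * IA) ->
       LAS b0A b0B tI tR tP k s (B_free_eq tI tR IA) /\ b0B * tI < b0A * tI) /\
    (forall IB : R, 1 < b0B * tI -> Ibar_spec b0B tI tR k IB ->
       b0A * tI < expR (k * IB) ->
       LAS b0A b0B tI tR tP k s (A_free_eq tI tR IB) /\ b0A * tI < b0B * tI)) /\
  (* (3) 0 < s < 1 *)
  (0 < s < 1 ->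
    (forall IA : R, 1 < b0A * tI -> Ibar_spec b0A tI tR k IA ->
       b0B * tI < expR (k * IA) / (expR (k * IA) - s * (expR (k * IA) - 1)) ->
       LAS b0A b0B tI tR tP k s (B_free_eq tI tR IA) /\ b0B * tI < b0A * tI) /\
    (forall IB : R, 1 < b0B * tI -> Ibar_spec b0B tI tR k IB ->
       b0A * tI < expR (k * IB) / (expR (k * IB) - s * (expR (k * IB) - 1)) ->
       LAS b0A b0B tI tR tP k s (A_free_eq tI tR IB) /\ b0A * tI < b0B * tI)).
Proof.
have keyB : forall IA, Ibar_spec b0A tI tR k IA ->
    b0B * tI * (expR (k * IA) - s * (expR (k * IA) - 1)) < expR (k * IA) ->
    LAS b0A b0B tI tR tP k s (B_free_eq tI tR IA).
  move=> IA hI hN; have hIA := hI.1.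
  rewrite /B_free_eq; apply: LAS_Bgen => //; first exact: hyp_of.
  by rewrite expRN; apply: hg_of => //; rewrite expR_gt0.
have keyA : forall IB, Ibar_spec b0B tI tR k IB ->
    b0A * tI * (expR (k * IB) - s * (expR (k * IB) - 1)) < expR (k * IB) ->
    LAS b0A b0B tI tR tP k s (A_free_eq tI tR IB).
  move=> IB hI hN; have hIB := hI.1.
  rewrite /A_free_eq; apply: LAS_Agen => //; first exact: hyp_of.
  by rewrite expRN; apply: hg_of => //; rewrite expR_gt0.
split.
  move=> s0; split.
    move=> IA _ hB hI; apply: keyB => //; rewrite s0 mul0r subr0.
    by rewrite -[X in _ < X]mul1r ltr_pM2r // expR_gt0.
  move=> IB _ hA hI; apply: keyA => //; rewrite s0 mul0r subr0.
  by rewrite -[X in _ < X]mul1r ltr_pM2r // expR_gt0.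
split.
  move=> s1; split.
    move=> IA _ hI hB; split; last exact: lt_trans hB (X_lt hb0A htI htR hI).
    by apply: keyB => //; rewrite s1 mul1r (_ : _ - _ = 1) ?mulr1 //; ring.
  move=> IB _ hI hA; split; last exact: lt_trans hA (X_lt hb0B htI htR hI).
  by apply: keyA => //; rewrite s1 mul1r (_ : _ - _ = 1) ?mulr1 //; ring.
move=> /andP [s0 s1].
have gen : forall IA b b', 0 < k -> Ibar_spec b' tI tR k IA ->
    b * tI < expR (k * IA) / (expR (k * IA) - s * (expR (k * IA) - 1)) ->
    b * tI * (expR (k * IA) - s * (expR (k * IA) - 1)) < expR (k * IA) /\
    b * tI < expR (k * IA).
  move=> IA b b' hk' [hIA _] hB.
  have hX1 : 1 < expR (k * IA) by rewrite expR_gt1 mulr_gt0.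
  have hD1 : 1 <= expR (k * IA) - s * (expR (k * IA) - 1).
    have : 0 <= (1 - s) * (expR (k * IA) - 1).
      by rewrite mulr_ge0 // subr_ge0 ltW.
    lra.
  have hD : 0 < expR (k * IA) - s * (expR (k * IA) - 1) by lra.
  split; first by rewrite -ltr_pdivlMr.
  apply: (lt_le_trans hB); rewrite ler_pdivrMr //.
  rewrite -[X in X <= _]mulr1 ler_pM2l ?expR_gt0 //.
split.
  move=> IA _ hI hB; have [hN hlt] := gen IA b0B b0A hk hI hB.
  split; [exact: keyB | exact: lt_trans hlt (X_lt hb0A htI htR hI)].
move=> IB _ hI hA; have [hN hlt] := gen IB b0A b0B hk hI hA.
split; [exact: keyA | exact: lt_trans hlt (X_lt hb0B htI htR hI)].
Qed.
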